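(* Let $q$ be a prime power, $M\geq2$ an integer, $k\geq 1$, and let $f\in\mathbb{F}_q[x]$ be a SRIM polynomial of degree $2k$. Let $C_f\in\mathrm{Sp}(2k,q)$ be an element with characteristic polynomial $f$, and suppose $\alpha\in\mathrm{Sp}(2k,q)$ satisfies $\alpha^M=C_f$. Then $f(x^M)$ has a SRIM factor of degree $2k$.
   Context: For a monic polynomial $f$ of degree $r$ with $f(0)\neq0$, $f^*(x)=f(0)^{-1}x^rf(x^{-1})$; $f$ is self-reciprocal if $f=f^*$. SRIM means self-reciprocal irreducible monic. $\mathrm{Sp}(2k,q)$ is the symplectic group of a non-degenerate alternating form on $\mathbb{F}_q^{2k}$. *)

(* Defs.v *)
From HB Require Import structures.
From mathcomp Require Import all_boot all_order all_algebra all_field.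
Set Implicit Arguments. Unset Strict Implicit. Unset Printing Implicit Defensive.
Import GRing.Theory.
Local Open Scope ring_scope.

(* f^*(x) = f(0)^{-1} x^r f(x^{-1}), r = deg f: the coefficient of x^i in
   x^r f(1/x) is the coefficient of x^(r-i) in f. *)
Definition reciprocal (F : fieldType) (f : {poly F}) : {poly F} :=
  (f`_0)^-1 *: \poly_(i < size f) f`_((size f).-1 - i).

Definition self_reciprocal (F : fieldType) (f : {poly F}) : Prop :=
  f`_0 != 0 /\ f = reciprocal f.

Definition SRIM (F : fieldType) (f : {poly F}) : Prop :=
  [/\ f \is monic, irreducible_poly f & self_reciprocal f].

(* J is the Gram matrix of a non-degenerate alternating bilinear form
   B(u,v) = u *m J *m v^T on row vectors. *)
Definition nondeg_alternating (F : fieldType) (n : nat) (J : 'M[F]_n) : Prop :=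
  [/\ J^T = - J, forall i, J i i = 0 & \det J != 0].

(* A lies in Sp(J): B(uA, vA) = B(u, v) for all u v. *)
Definition symplectic (F : fieldType) (n : nat) (J A : 'M[F]_n) : Prop :=
  A *m J *m A^T = J.

Definition mxpow (F : fieldType) (n : nat) (A : 'M[F]_n) (m : nat) : 'M[F]_n :=
  iter m (mulmx A) 1%:M.

(* Main.v *)
Require Import Defs.
From HB Require Import structures.
From mathcomp Require Import all_boot all_order all_algebra all_field.
Import GRing.Theory.
Local Open Scope ring_scope.

Lemma horner_mxZ' (F : fieldType) n (A : 'M[F]_n.+1) (c : F) p :
  horner_mx A (c *: p) = c *: horner_mx A p.
Proof. by rewrite -mul_polyC rmorphM /= horner_mx_C -mulmxE mul_scalar_mx. Qed.

Lemma horner_mxE (F : fieldType) n (A : 'M[F]_n.+1) p :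
  horner_mx A p = \sum_(i < size p) p`_i *: A ^+ i.
Proof.
rewrite -{1}[p]coefK poly_def rmorph_sum; apply: eq_bigr => i _ /=.
by rewrite horner_mxZ' rmorphXn /= horner_mx_X.
Qed.

Lemma horner_mx_comp (F : fieldType) n (A : 'M[F]_n.+1) p q :
  horner_mx A (p \Po q) = horner_mx (horner_mx A q) p.
Proof.
rewrite comp_polyE rmorph_sum horner_mxE; apply: eq_bigr => i _ /=.
by rewrite horner_mxZ' rmorphXn.
Qed.

Lemma mxpow_exp (F : fieldType) n (A : 'M[F]_n.+1) m : mxpow A m = A ^+ m.
Proof.
elim: m => [|m IH] /=; first by rewrite expr0.
by rewrite /mxpow /= -/(mxpow A m) IH exprS mulmxE.
Qed.
Lemma main (F : fieldType) n' (f : {poly F}) (J Cf alpha : 'M[F]_n'.+1) (M : nat)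
 (hn : (1 <= n')%N) (firr : irreducible_poly f)
 (hJ : \det J != 0) (halpha : alpha *m J *m alpha^T = J) (hCf : char_poly Cf = f)
 (hpow : alpha ^+ M = Cf) :
 exists g, [/\ SRIM g, size g = n'.+2 & g %| f \Po 'X^M].
Proof.
have fmon : f \is monic by rewrite -hCf char_poly_monic.
have fsz : size f = n'.+2 by rewrite -hCf size_char_poly.
have hCfmin : mxminpoly Cf = f.
  have dv : mxminpoly Cf %| f by rewrite -hCf mxminpoly_dvd_char.
  case: (irredp_XsubCP firr dv) => [/eqp_size|].
    rewrite size_mxminpoly size_poly1 => -[] d0.
    by have := mxminpoly_nonconstant Cf; rewrite d0.
  by rewrite eqp_monic // ?mxminpoly_monic // => /eqP.
have dC : degree_mxminpoly Cf = n'.+1.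
  by apply: succn_inj; rewrite -size_mxminpoly hCfmin fsz.
set d := degree_mxminpoly alpha.
have Eh : forall j, alpha ^+ j = horner_mx alpha ('X^j).
  by move=> j; rewrite rmorphXn /= horner_mx_X.
have sub1 : (powers_mx Cf (degree_mxminpoly Cf) <= powers_mx alpha d)%MS.
  apply/row_subP => i; rewrite rowK; have -> : Cf ^+ i = alpha ^+ (M * i) by rewrite exprM hpow.
  rewrite Eh; exact: horner_mx_mem.
have dle : (d <= n'.+1)%N.
  have := dvdp_leq _ (mxminpoly_dvd_char alpha).
  rewrite size_mxminpoly size_char_poly; apply.
  by rewrite monic_neq0 // char_poly_monic.
have rk := mxrankS sub1.
rewrite (eqnP (minpoly_mx_free Cf)) (eqnP (minpoly_mx_free alpha)) -/d dC in rk.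
have dn : d = n'.+1 by apply/eqP; rewrite eqn_leq dle rk.
have sub2 : (powers_mx alpha d <= powers_mx Cf (degree_mxminpoly Cf))%MS.
  rewrite -(geq_leqif (mxrank_leqif_sup sub1)).
  by rewrite (eqnP (minpoly_mx_free Cf)) (eqnP (minpoly_mx_free alpha)) -/d dC dn.
have toCf : forall p, horner_mx alpha p = horner_mx Cf (mx_inv_horner Cf (horner_mx alpha p)).
  move=> p; rewrite mx_inv_hornerK //; exact: submx_trans (horner_mx_mem _ _) sub2.
have prime : forall u v, f %| u * v -> f %| u \/ f %| v.
  move=> u v fuv; case: (irredp_XsubCP firr (dvdp_gcdl f u)) => [g1|gf].
    right; rewrite -(Gauss_dvdpr _ (q := u)) //.
    by rewrite /coprimep (eqp_size g1) size_poly1.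
  left; rewrite -(eqp_dvdl _ gf); exact: dvdp_gcdr.
set g := mxminpoly alpha.
have gsz : size g = n'.+2 by rewrite size_mxminpoly -/d dn.
have gmon : g \is monic by exact: mxminpoly_monic.
have gnz : g != 0 by rewrite monic_neq0.
have girr : irreducible_poly g.
  split; first by rewrite gsz.
  move=> q q1 qg.
  have qnz : q != 0 by apply: contraTneq qg => ->; rewrite dvd0p.
  have defg : g = (g %/ q) * q by rewrite divpK.
  have H0 : horner_mx alpha (g %/ q) * horner_mx alpha q = 0.
    by rewrite -rmorphM /= -defg mx_root_minpoly.
  rewrite toCf [horner_mx alpha q]toCf -rmorphM /= in H0.
  have := mxminpoly_min H0; rewrite hCfmin => /prime [].
    rewrite -hCfmin dvd_mxminpoly -toCf -/g => /eqP /mxminpoly_min gr.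
    have rnz : g %/ q != 0 by apply: contraNneq gnz => r0; rewrite defg r0 mul0r.
    have := dvdp_leq rnz gr; rewrite size_divp // gsz.
    have : (1 < size q)%N by rewrite ltn_neqAle eq_sym q1 lt0n size_poly_eq0.
    by case: (size q) => [|[|s]] //= _; rewrite subSS ltnNge leq_subr.
  rewrite -hCfmin dvd_mxminpoly -toCf -/g => /eqP /mxminpoly_min gq.
  by rewrite /eqp qg gq.
have g0 : g`_0 != 0.
  apply/negP => /eqP g00.
  have Xg : ('X - 0%:P) %| g by rewrite dvdp_XsubCl /root horner_coef0 g00.
  case: (irredp_XsubCP girr Xg) => /eqp_size; rewrite size_XsubC ?size_poly1 // gsz.
  by move=> /eqP; rewrite !eqSS => /eqP n0; rewrite -n0 in hn.
have sp : forall i, alpha ^+ i *m J *m (alpha ^+ i)^T = J.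
  elim => [|i IH]; first by rewrite expr0 mul1mx trmx1 mulmx1.
  rewrite exprS -mulmxE trmx_mul -!mulmxA (mulmxA J) (mulmxA (alpha ^+ i)) (mulmxA (alpha ^+ i) J) IH.
  by rewrite mulmxA.
set r := \poly_(i < n'.+2) g`_(n'.+1 - i).
have rsz : size r = n'.+2 by rewrite size_poly_eq // subnn.
have E1 : (horner_mx alpha g)^T = \sum_(i < n'.+2) g`_i *: (alpha ^+ i)^T.
  rewrite horner_mxE gsz linear_sum; apply: eq_bigr => i _ /=; by rewrite linearZ.
have E2 : horner_mx alpha r = \sum_(i < n'.+2) g`_(n'.+1 - i) *: alpha ^+ i.
  rewrite horner_mxE rsz; apply: eq_bigr => i _; by rewrite coef_poly ltn_ord.
have E3 : \sum_(i < n'.+2) g`_(n'.+1 - i) *: alpha ^+ i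
        = \sum_(i < n'.+2) g`_i *: alpha ^+ (n'.+1 - i).
  rewrite (reindex_inj rev_ord_inj) /=; apply: eq_bigr => i _.
  by rewrite subSS subKn // -ltnS.
have E4 : alpha ^+ n'.+1 *m J *m (horner_mx alpha g)^T = horner_mx alpha r *m J.
  rewrite E1 E2 E3 mulmx_sumr mulmx_suml; apply: eq_bigr => i _.
  rewrite -scalemxAr -scalemxAl; congr (_ *: _).
  have ile : (i <= n'.+1)%N by rewrite -ltnS ltn_ord.
  have -> : alpha ^+ n'.+1 = alpha ^+ (n'.+1 - i) * alpha ^+ i by rewrite -exprD subnK.
  by rewrite -mulmxE -!mulmxA (mulmxA (alpha ^+ i)) sp.
rewrite mx_root_minpoly trmx0 mulmx0 in E4.
have Ju : J \in unitmx by rewrite unitmxE unitfE.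
have hr0 : horner_mx alpha r = 0.
  by rewrite -[horner_mx alpha r](mulmxK Ju) -E4 mul0mx.
have gr : g %| r by apply: mxminpoly_min.
have grq : g %= r by rewrite -(dvdp_size_eqp gr) gsz rsz.
have g0i : (g`_0)^-1 != 0 by rewrite invr_eq0.
have r2mon : (g`_0)^-1 *: r \is monic.
  rewrite monicE lead_coefZ /lead_coef rsz coef_poly /= subnn ltnS leqnn mulVf ?eqxx //.
have grec : g = reciprocal g.
  rewrite /reciprocal gsz /=; apply/eqP; rewrite -/r -eqp_monic //.
  by apply: eqp_trans grq _; rewrite eqp_sym eqp_scale.
exists g; split => //.
apply: mxminpoly_min.
by rewrite horner_mx_comp rmorphXn /= horner_mx_X hpow -hCfmin mx_root_minpoly.
Qed.

Theorem lemma5p1 (F : finFieldType) (M k : nat) (hM : (2 <= M)%N) (hk : (1 <= k)%N)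
  (f : {poly F}) (hf : SRIM f) (hdeg : size f = (k.*2).+1)
  (J : 'M[F]_(k.*2)) (hJ : nondeg_alternating J)
  (Cf alpha : 'M[F]_(k.*2))
  (hC : symplectic J Cf) (hCf : char_poly Cf = f)
  (halpha : symplectic J alpha) (hpow : mxpow alpha M = Cf) :
  exists g : {poly F}, [/\ SRIM g, size g = (k.*2).+1 & g %| f \Po 'X^M].
Proof.
case: k hk hdeg J hJ Cf alpha hC hCf halpha hpow => [//|k] _ _ J hJ Cf alpha _ hCf halpha hpow.
case: hf => _ firr _; case: hJ => _ _ hdet.
rewrite mxpow_exp in hpow.
exact: (@main F (k.*2).+1 f J Cf alpha M isT firr hdet halpha hCf hpow).
Qed.
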